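(* Let $X$ be a definable set in $(Z,R)^{eq}$ which is both $Z$-internal and $R$-internal. Then $X$ is finite.
   Context: Let $\mathfrak C$ be a monster model, $Z,R$ definable subsets of $\mathfrak C$ which are stably embedded (subsets of $Z^n$, resp. $R^n$, definable with parameters from $\mathfrak C$ are definable with parameters from $Z$, resp. $R$) and fully orthogonal (for all $m,n$, every definable subset of $Z^m\times R^n$ is a finite union of sets $U\times V$ with $U\subseteq Z^m$, $V\subseteq R^n$ definable). $(Z,R)^{eq}$ is the two-sorted structure $(Z,R)$ (no connection between the sorts) expanded by all imaginary sorts; ''definable'' means definable in $(Z,R)^{eq}$ with parameters. A definable set $X$ is $Z$-internal (resp. $R$-internal) if there is a definable surjection from $Z^k$ (resp. $R^k$) onto $X$ for some $k$. *)

(* Defs.v *)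
From mathcomp Require Import all_boot.
From mathcomp Require Import boolp classical_sets cardinality.

Set Implicit Arguments.
Unset Strict Implicit.
Unset Printing Implicit Defensive.

Local Open Scope classical_set_scope.

(* Points of the home sort  Z^m x R^n  of the two-sorted structure (Z,R). *)
Definition pt (Z R : Type) (m n : nat) := (('I_m -> Z) * ('I_n -> R))%type.

Definition reindex (Z R : Type) (m n m' n' : nat)
  (s : 'I_m' -> 'I_m) (t : 'I_n' -> 'I_n) (p : pt Z R m n) : pt Z R m' n' :=
  (p.1 \o s, p.2 \o t).

Definition lpart (Z R : Type) (m n m' n' : nat) (r : pt Z R (m + m') (n + n'))
  : pt Z R m n := (r.1 \o lshift m', r.2 \o lshift n').
Definition rpart (Z R : Type) (m n m' n' : nat) (r : pt Z R (m + m') (n + n'))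
  : pt Z R m' n' := (r.1 \o @rshift m m', r.2 \o @rshift n n').

(* D is the family of all subsets of Z^m x R^n definable with parameters in a
   two-sorted structure (Z,R).  The axioms below are exactly the closure
   properties of such a family: boolean combinations, substitution of
   variables (preimages under coordinate maps), existential quantification
   (images under coordinate maps), equality on each sort, and parameters
   (singletons).  Conversely any such family is the family of
   parameter-definable sets of the structure having all its members as
   basic relations. *)
Record def_family (Z R : Type) (D : forall m n : nat, set (set (pt Z R m n)))
  : Prop := {
  def_setT : forall m n, D m n setT;
  def_setC : forall m n (A : set (pt Z R m n)), D m n A -> D m n (~` A);
  def_setI : forall m n (A B : set (pt Z R m n)),
      D m n A -> D m n B -> D m n (A `&` B);
  def_preim : forall m n m' n' (s : 'I_m -> 'I_m') (t : 'I_n -> 'I_n')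
      (A : set (pt Z R m n)), D m n A -> D m' n' (reindex s t @^-1` A);
  def_image : forall m n m' n' (s : 'I_m' -> 'I_m) (t : 'I_n' -> 'I_n)
      (A : set (pt Z R m n)), D m n A -> D m' n' (reindex s t @` A);
  def_eqZ : D 2 0 [set p | p.1 ord0 = p.1 ord_max];
  def_eqR : D 0 2 [set p | p.2 ord0 = p.2 ord_max];
  def_point : forall m n (p : pt Z R m n), D m n [set p] }.

Definition defZ (Z R : Type) (D : forall m n : nat, set (set (pt Z R m n)))
  (m : nat) (U : set ('I_m -> Z)) : Prop := D m 0 [set p | U p.1].
Definition defR (Z R : Type) (D : forall m n : nat, set (set (pt Z R m n)))
  (n : nat) (V : set ('I_n -> R)) : Prop := D 0 n [set p | V p.2].
Definition def_rel (Z R : Type) (D : forall m n : nat, set (set (pt Z R m n)))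
  (m n m' n' : nat) (E : pt Z R m n -> pt Z R m' n' -> Prop) : Prop :=
  D (m + m') (n + n') [set r | E (lpart r) (rpart r)].

Definition fully_orthogonal (Z R : Type)
  (D : forall m n : nat, set (set (pt Z R m n))) : Prop :=
  forall m n (A : set (pt Z R m n)), D m n A ->
    exists (k : nat) (U : 'I_k -> set ('I_m -> Z)) (V : 'I_k -> set ('I_n -> R)),
      (forall i, defZ D (U i) /\ defR D (V i)) /\
      A = [set p | exists i, U i p.1 /\ V i p.2].

Definition equiv_on (T : Type) (Y : set T) (E : T -> T -> Prop) : Prop :=
  [/\ forall p q, E p q -> Y p /\ Y q,
      forall p, Y p -> E p p,
      forall p q, E p q -> E q p &
      forall p q r, E p q -> E q r -> E p r].

(* The definable set  Y/E  of (Z,R)^eq, as the set of its elements (E-classes). *)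
Definition quot (T : Type) (Y : set T) (E : T -> T -> Prop) : set (set T) :=
  [set C | exists2 y, Y y & C = E y].

(* A map f : Z^k -> X is definable iff the
   preimage of its graph in Z^k x Y, {(z,y) | y in f z}, is definable. *)
Definition Z_internal (Z R : Type) (D : forall m n : nat, set (set (pt Z R m n)))
  (m n : nat) (Y : set (pt Z R m n)) (E : pt Z R m n -> pt Z R m n -> Prop)
  : Prop :=
  exists (k : nat) (f : ('I_k -> Z) -> set (pt Z R m n)),
    [/\ forall z, quot Y E (f z),
        def_rel D (fun (a : pt Z R k 0) (q : pt Z R m n) => f a.1 q) &
        forall C, quot Y E C -> exists z, f z = C].

Definition R_internal (Z R : Type) (D : forall m n : nat, set (set (pt Z R m n)))
  (m n : nat) (Y : set (pt Z R m n)) (E : pt Z R m n -> pt Z R m n -> Prop)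
  : Prop :=
  exists (k : nat) (g : ('I_k -> R) -> set (pt Z R m n)),
    [/\ forall r, quot Y E (g r),
        def_rel D (fun (a : pt Z R 0 k) (q : pt Z R m n) => g a.2 q) &
        forall C, quot Y E C -> exists r, g r = C].

(* Main.v *)
Require Import Defs.
From mathcomp Require Import all_boot.
From mathcomp Require Import boolp classical_sets cardinality.

Set Implicit Arguments.
Unset Strict Implicit.
Local Open Scope classical_set_scope.

Definition catf (T : Type) (k m : nat) (a : 'I_k -> T) (b : 'I_m -> T)
  : 'I_(k + m) -> T :=
  fun i => match split i with inl j => a j | inr j => b j end.

Lemma catf_l T k m (a : 'I_k -> T) b j : catf a b (lshift m j) = a j.
Proof. by rewrite /catf (unsplitK (inl j)). Qed.

Lemma catf_r T k m (a : 'I_k -> T) (b : 'I_m -> T) j : catf a b (rshift k j) = b j.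
Proof. by rewrite /catf (unsplitK (inr j)). Qed.

Lemma catf_lK T k m (a : 'I_k -> T) b : catf a b \o lshift m = a.
Proof. by apply/funext => j /=; rewrite catf_l. Qed.

Lemma catf_rK T k m (a : 'I_k -> T) (b : 'I_m -> T) : catf a b \o @rshift k m = b.
Proof. by apply/funext => j /=; rewrite catf_r. Qed.

Lemma finite_subsingleton T (S : set T) :
  (forall x y, S x -> S y -> x = y) -> finite_set S.
Proof.
move=> h; have [[x Sx]|] := pselect (exists x, S x).
  by apply: (sub_finite_set _ (finite_set1 x)) => y Sy; rewrite /= (h _ _ Sy Sx).
move=> nS; apply: (sub_finite_set _ (finite_set0 T)) => y Sy; apply: nS; by exists y.
Qed.

Theorem lemma2p4 (Z R : Type) (D : forall m n : nat, set (set (pt Z R m n)))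
  (hD : def_family D) (hort : fully_orthogonal D)
  (m n : nat) (Y : set (pt Z R m n)) (E : pt Z R m n -> pt Z R m n -> Prop)
  (hY : D m n Y) (hE : def_rel D E) (hEq : equiv_on Y E)
  (hZ : Z_internal D Y E) (hR : R_internal D Y E) :
  finite_set (quot Y E).
Proof.
case: hZ => k [f [fq fdef fsurj]].
case: hR => l [g [gq gdef gsurj]].
case: hEq => Eds Erefl Esym Etrans.
have meet : forall C C', quot Y E C -> quot Y E C' ->
    (C = C' <-> exists q, C q /\ C' q).
  move=> C C' [y1 Y1 ->] [y2 Y2 ->]; split.
    by move=> <-; exists y1; split; apply: Erefl.
  case=> q [h1 h2]; apply/funext => x; apply/propext; split => h.
    exact: Etrans _ _ _ h2 (Etrans _ _ _ (Esym _ _ h1) h).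
  exact: Etrans _ _ _ h1 (Etrans _ _ _ (Esym _ _ h2) h).
pose tf : 'I_(0 + n) -> 'I_(l + n) := fun j => rshift l (j : 'I_n).
pose sg : 'I_(0 + m) -> 'I_(k + m) := fun j => rshift k (j : 'I_m).
pose Pf := Defs.reindex (fun i : 'I_(k + m) => i) tf @^-1`
   [set r : pt Z R (k + m) (0 + n) | f (lpart r).1 (rpart r)].
pose Pg := Defs.reindex sg (fun i : 'I_(l + n) => i) @^-1`
   [set r : pt Z R (0 + m) (l + n) | g (lpart r).2 (rpart r)].
have DP : D k l (Defs.reindex (lshift m) (lshift n) @` (Pf `&` Pg)).
  apply: (def_image hD); apply: (def_setI hD); apply: (def_preim hD).
    exact: fdef.
  exact: gdef.
have tfE : forall p : pt Z R (k + m) (l + n),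
    (p.2 \o tf) \o @rshift 0 n = p.2 \o @rshift l n.
  move=> p; apply/funext => j /=; congr (p.2 _); exact: val_inj.
have sgE : forall p : pt Z R (k + m) (l + n),
    (p.1 \o sg) \o @rshift 0 m = p.1 \o @rshift k m.
  move=> p; apply/funext => j /=; congr (p.1 _); exact: val_inj.
have PfE : forall p, Pf p <-> f (p.1 \o lshift m) (p.1 \o @rshift k m, p.2 \o @rshift l n).
  move=> p; rewrite /Pf /Defs.reindex /lpart /rpart /=.
  by rewrite (tfE p).
have PgE : forall p, Pg p <-> g (p.2 \o lshift n) (p.1 \o @rshift k m, p.2 \o @rshift l n).
  move=> p; rewrite /Pg /Defs.reindex /lpart /rpart /=.
  by rewrite (sgE p).
have relE : Defs.reindex (lshift m) (lshift n) @` (Pf `&` Pg) =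
    [set a : pt Z R k l | f a.1 = g a.2].
  apply/funext => a; apply/propext; split.
    case=> p [/PfE h1 /PgE h2] <-; rewrite /Defs.reindex /=.
    by apply/meet; [exact: fq | exact: gq | eexists; split; eassumption].
  move=> /meet => /(_ (fq _) (gq _)) [q [h1 h2]].
  exists (catf a.1 q.1, catf a.2 q.2).
    split; [apply/PfE | apply/PgE]; rewrite /= !catf_lK !catf_rK;
      by case: q h1 h2.
  by rewrite /Defs.reindex /= !catf_lK; case: a {h1 h2}.
rewrite relE in DP.
have [K [U [V [_ UV]]]] := hort _ _ _ DP.
pose S (i : 'I_K) := [set C | exists z r, U i z /\ V i r /\ C = f z].
apply: (sub_finite_set (B := \bigcup_(i in setT) S i)).
  move=> C QC; have [z fz] := fsurj _ QC; have [r gr] := gsurj _ QC.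
  have : [set a : pt Z R k l | f a.1 = g a.2] (z, r) by rewrite /= fz gr.
  rewrite UV => -[i [Ui Vi]]; exists i => //; exists z, r; split => //; split => //.
apply: bigcup_finite; first exact: finite_finset.
move=> i _; apply: finite_subsingleton => C C' [z [r [Uz [Vr ->]]]] [z' [r' [Uz' [Vr' ->]]]].
have e1 : [set a : pt Z R k l | f a.1 = g a.2] (z, r') by rewrite UV; exists i.
have e2 : [set a : pt Z R k l | f a.1 = g a.2] (z', r') by rewrite UV; exists i.
by rewrite /= in e1 e2; rewrite e1 e2.
Qed.
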